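(* Every prime tournament which is not isomorphic to $P_n$ for any $n$ has at most one matching ordering.
   Context: A tournament is a finite, non-null, loopless directed graph in which for any two distinct vertices $u,v$ there is exactly one edge with both ends in $\{u,v\}$; write $u\to v$ for the edge from $u$ to $v$. A homogeneous set of $G$ is a set $X\subseteq V(G)$ such that each vertex outside $X$ either has edges to all of $X$ or edges from all of $X$; $G$ is prime if every homogeneous set $X$ has $|X|\le1$ or $X=V(G)$. Given an ordering $v_1,\dots,v_n$ of the vertices, a backedge is an edge $v_j\to v_i$ with $j>i$; the ordering is a matching ordering if every vertex is the head or tail of at most one backedge. $P_n$ is the tournament on $v_1,\dots,v_n$ with $v_i\to v_j$ if $j-i\ge2$ and $v_{i+1}\to v_i$ for $1\le i\le n-1$. *)

(* Defs.v *)
From mathcomp Require Import all_boot.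
Set Implicit Arguments. Unset Strict Implicit. Unset Printing Implicit Defensive.

Definition tournament (V : finType) (e : rel V) : Prop :=
  0 < #|V| /\
  (forall v, ~~ e v v) /\
  (forall u v, u != v -> e u v = ~~ e v u).

Definition homogeneous (V : finType) (e : rel V) (X : {set V}) : Prop :=
  forall w, w \notin X ->
    (forall x, x \in X -> e w x) \/ (forall x, x \in X -> e x w).

Definition prime_tournament (V : finType) (e : rel V) : Prop :=
  forall X : {set V}, homogeneous e X -> #|X| <= 1 \/ X = setT.

Definition vertex_ordering (V : finType) (s : seq V) : Prop :=
  uniq s /\ forall v, v \in s.

(* Backedges of s incident with v: v -> w with w earlier than v (v is the tail),
   or w -> v with w later than v (v is the head).  Each such backedge is
   determined by its other end w. *)
Definition backedge_nbrs (V : finType) (e : rel V) (s : seq V) (v : V) : {set V} :=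
  [set w | (e v w && (index w s < index v s)) || (e w v && (index v s < index w s))].

Definition matching_ordering (V : finType) (e : rel V) (s : seq V) : Prop :=
  vertex_ordering s /\ forall v, #|backedge_nbrs e s v| <= 1.

Definition Pn_rel (n : nat) : rel 'I_n :=
  fun i j => (i.+2 <= j) || (i == j.+1 :> nat).

Definition iso_to_Pn (V : finType) (e : rel V) (n : nat) : Prop :=
  exists f : 'I_n -> V, bijective f /\ forall i j, e (f i) (f j) = Pn_rel i j.

(* Main.v *)
Require Import Defs.
From mathcomp Require Import all_boot zify.
Set Implicit Arguments. Unset Strict Implicit. Unset Printing Implicit Defensive.


Lemma ar_B (pa pb pc qa qb qc : nat) :
  pa != pc -> pb != pc -> pa != pb -> qa != qb -> qa != qc -> qb != qc ->
  (pa < pb) != (qa < qb) -> (pa < pc) = (qa < qc) -> (pb < pc) = (qb < qc) ->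
  (pa < pc) = (pb < pc).
Proof.
case: (ltngtP pa pb); case: (ltngtP pa pc); case: (ltngtP pb pc);
case: (ltngtP qa qb); case: (ltngtP qa qc); case: (ltngtP qb qc) => //= *; lia.
Qed.

Lemma ar_A (pa pb pc qa qb qc : nat) :
  pa != pc -> pb != pc -> pa != pb -> qa != qb -> qa != qc -> qb != qc ->
  (pa < pb) != (qa < qb) -> (pb < pc) != (qb < qc) -> (pa < pc) = (qa < qc) ->
  (pa < pb) = (pc < pb).
Proof.
case: (ltngtP pa pb); case: (ltngtP pa pc); case: (ltngtP pb pc);
case: (ltngtP qa qb); case: (ltngtP qa qc); case: (ltngtP qb qc) => //= *; lia.
Qed.

Section S.
Variables (V : finType) (e : rel V) (s1 s2 : seq V) (x0 : V).
Hypothesis Ht : tournament e.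
Hypothesis Hpr : prime_tournament e.
Hypothesis M1 : matching_ordering e s1.
Hypothesis M2 : matching_ordering e s2.

Lemma e_irr v : e v v = false.
Proof. by case: Ht => _ [H _]; apply: negbTE (H v). Qed.

Lemma e_asym u v : u != v -> e u v = ~~ e v u.
Proof. by case: Ht => _ [_ H] huv; apply: H. Qed.

Definition bk (s : seq V) (u v : V) := (u != v) && (e u v != (index u s < index v s)).

Lemma index_inj (s : seq V) : vertex_ordering s -> forall u v : V, index u s = index v s -> u = v.
Proof.
case=> _ H u v huv.
by rewrite -(nth_index x0 (H u)) -(nth_index x0 (H v)) huv.
Qed.

Lemma index_neq (s : seq V) : vertex_ordering s -> forall u v : V, u != v -> index u s != index v s.
Proof. move=> H u v; apply: contra => /eqP/(index_inj H) ->; done. Qed.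

Lemma lt_flip (s : seq V) : vertex_ordering s -> forall u v : V, u != v ->
  (index v s < index u s) = ~~ (index u s < index v s).
Proof.
move=> H u v /(index_neq H); by case: (ltngtP (index u s) (index v s)).
Qed.

Lemma bk_sym (s : seq V) : vertex_ordering s -> forall u v : V, bk s u v = bk s v u.
Proof.
move=> H u v; rewrite /bk; case: (eqVneq u v) => [->//|huv].
rewrite /= (e_asym huv) (lt_flip H huv).
by case: (e v u); case: (_ < _).
Qed.

Lemma bk_nbrs (s : seq V) : vertex_ordering s -> forall v w : V, bk s v w = (w \in backedge_nbrs e s v).
Proof.
move=> H v w; rewrite /bk inE; case: (eqVneq v w) => [->|hvw] /=.
  by rewrite e_irr ltnn.
have hwv : w != v by rewrite eq_sym.
rewrite /= (lt_flip H hvw) (e_asym hwv).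
by case: (e v w); case: (_ < _).
Qed.

Lemma bk_match (s : seq V) : matching_ordering e s -> forall v a b : V, bk s v a -> bk s v b -> a = b.
Proof.
case=> H hc v a b; rewrite !(bk_nbrs H) => ha hb.
by move/card_le1_eqP: (hc v) => /(_ a b ha hb).
Qed.

Lemma bk_neq (s : seq V) (u v : V) : bk s u v -> u != v.
Proof. by case/andP. Qed.

Lemma e_bk (s : seq V) (u v : V) : u != v -> e u v = (bk s u v != (index u s < index v s)).
Proof. by rewrite /bk => ->; case: (e u v); case: (_ < _). Qed.


Let VO1 : vertex_ordering s1 := proj1 M1.
Let VO2 : vertex_ordering s2 := proj1 M2.

Definition p (v : V) := index v s1.
Definition q (v : V) := index v s2.
Definition inv (u v : V) := (p u < p v) != (q u < q v).
Local Notation b1 := (bk s1).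
Local Notation b2 := (bk s2).

Lemma p_flip u v : u != v -> (p v < p u) = ~~ (p u < p v).
Proof. move=> h; exact: (lt_flip VO1 h). Qed.
Lemma q_flip u v : u != v -> (q v < q u) = ~~ (q u < q v).
Proof. move=> h; exact: (lt_flip VO2 h). Qed.
Lemma p_neq u v : u != v -> p u != p v.
Proof. move=> h; exact: (index_neq VO1 h). Qed.
Lemma q_neq u v : u != v -> q u != q v.
Proof. move=> h; exact: (index_neq VO2 h). Qed.
Lemma e_b1 u v : u != v -> e u v = (b1 u v != (p u < p v)).
Proof. move=> h; exact: (e_bk s1 h). Qed.

Lemma inv_irr v : inv v v = false.
Proof. by rewrite /inv !ltnn. Qed.

Lemma inv_sym u v : inv u v = inv v u.
Proof.
case: (eqVneq u v) => [->//|h]; rewrite /inv (p_flip h) (q_flip h).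
by case: (_ < _); case: (_ < _).
Qed.

Lemma inv_neq u v : inv u v -> u != v.
Proof. by apply: contraTneq => ->; rewrite inv_irr. Qed.

Lemma inv_b u v : u != v -> inv u v = (b1 u v != b2 u v).
Proof.
move=> h; rewrite /inv /bk h /p /q /=.
by case: (e u v); case: (_ < _); case: (_ < _).
Qed.

Lemma ninv_eq u v : ~~ inv u v -> (p u < p v) = (q u < q v).
Proof. by rewrite /inv negbK => /eqP. Qed.

Lemma b1_sym u v : b1 u v = b1 v u. Proof. exact: (bk_sym VO1 u v). Qed.
Lemma b1_match v a b : b1 v a -> b1 v b -> a = b. Proof. exact: (bk_match M1 (v:=v)). Qed.
Lemma b2_match v a b : b2 v a -> b2 v b -> a = b. Proof. exact: (bk_match M2 (v:=v)). Qed.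

Lemma inv_or u v : inv u v -> b1 u v || b2 u v.
Proof.
move=> h; move: (h); rewrite (inv_b (inv_neq h)).
by case: (b1 u v); case: (b2 u v).
Qed.

Lemma L_deg v a b c : inv v a -> inv v b -> inv v c ->
  a != b -> a != c -> b != c -> False.
Proof.
move=> /inv_or ha /inv_or hb /inv_or hc nab nac nbc.
case/orP: ha => ha; case/orP: hb => hb; case/orP: hc => hc.
all: first [ by rewrite (b1_match ha hb) eqxx in nab
           | by rewrite (b2_match ha hb) eqxx in nab
           | by rewrite (b1_match ha hc) eqxx in nac
           | by rewrite (b2_match ha hc) eqxx in nac
           | by rewrite (b1_match hb hc) eqxx in nbc
           | by rewrite (b2_match hb hc) eqxx in nbc ].
Qed.

Lemma L_alt v a b : inv v a -> inv v b -> a != b -> b1 v a != b1 v b.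
Proof.
move=> ha hb nab.
have ea := inv_b (inv_neq ha); have eb := inv_b (inv_neq hb).
move: ha hb; rewrite ea eb.
case E1: (b1 v a); case E2: (b1 v b) => //=.
- by rewrite (b1_match E1 E2) eqxx in nab.
- case F1: (b2 v a) => //; case F2: (b2 v b) => //.
  by rewrite (b2_match F1 F2) eqxx in nab.
Qed.

Lemma L_b1inv u v w : b1 u v -> inv u w -> inv u v.
Proof.
move=> h1 hw; apply: contraT => hn.
have nuv := bk_neq h1.
have h2 : b2 u v by move: hn; rewrite (inv_b nuv) h1; case: (b2 u v).
have := inv_or hw; case/orP => h.
- by move: hn; rewrite (b1_match h1 h) hw.
- by move: hn; rewrite (b2_match h2 h) hw.
Qed.

Lemma L_B a b c : inv a b -> ~~ inv a c -> ~~ inv b c -> c != a -> c != b ->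
  (p a < p c) = (p b < p c).
Proof.
move=> hab hac hbc nca ncb; have nab := inv_neq hab.
apply: (ar_B (qa:=q a) (qb:=q b) (qc:=q c)).
- by apply: p_neq; rewrite eq_sym.
- by apply: p_neq; rewrite eq_sym.
- exact: p_neq.
- exact: q_neq.
- by apply: q_neq; rewrite eq_sym.
- by apply: q_neq; rewrite eq_sym.
- exact: hab.
- exact: ninv_eq.
- exact: ninv_eq.
Qed.

Lemma L_A a b c : inv a b -> inv b c -> ~~ inv a c -> a != c ->
  (p a < p b) = (p c < p b).
Proof.
move=> hab hbc hac nac; have nab := inv_neq hab; have nbc := inv_neq hbc.
apply: (ar_A (qa:=q a) (qb:=q b) (qc:=q c)).
- exact: p_neq.
- exact: p_neq.
- exact: p_neq.
- exact: q_neq.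
- exact: q_neq.
- exact: q_neq.
- exact: hab.
- exact: hbc.
- exact: ninv_eq.
Qed.

Lemma L_orient a b c : inv a b -> inv b c -> ~~ inv a c -> a != c -> e a b = e b c.
Proof.
move=> hab hbc hac nac; have nab := inv_neq hab; have nbc := inv_neq hbc.
have := L_alt (v:=b) (a:=a) (b:=c); rewrite inv_sym hab hbc nac => /(_ erefl erefl erefl).
rewrite (e_b1 nab) (e_b1 nbc) (L_A hab hbc hac nac) (p_flip nbc) (b1_sym a b).
by case: (b1 b a); case: (b1 b c); case: (_ < _).
Qed.


Definition ipath (P : seq V) := uniq P /\ forall i j, i < size P -> j < size P ->
  inv (nth x0 P i) (nth x0 P j) = (i == j.+1) || (j == i.+1).

Section Path.
Variable P : seq V.
Hypothesis HP : ipath P.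
Local Notation x i := (nth x0 P i).
Local Notation k := (size P).

Lemma ip_neq i j : i < k -> j < k -> i != j -> x i != x j.
Proof. by move=> hi hj; rewrite (nth_uniq x0 hi hj (proj1 HP)). Qed.

Lemma ip_inv i : i.+1 < k -> inv (x i) (x i.+1).
Proof. by move=> h; rewrite (proj2 HP) ?eqxx ?orbT // ltnW. Qed.

Lemma ip_ninv i j : i < k -> j < k -> i.+1 < j -> ~~ inv (x i) (x j).
Proof. by move=> hi hj hij; rewrite (proj2 HP) //; apply/negP; case/orP => /eqP; lia. Qed.

Lemma ip_ninv' i j : i < k -> j < k -> i.+1 < j -> ~~ inv (x j) (x i).
Proof. by move=> hi hj hij; rewrite inv_sym ip_ninv. Qed.

Lemma ip_has i : 1 < k -> i < k -> exists w, inv (x i) w.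
Proof.
move=> hk hi; case: (ltnP i.+1 k) => h.
- by exists (x i.+1); apply: ip_inv.
- exists (x i.-1); have hi0 : 0 < i by lia.
  have -> : x i = x (i.-1).+1 by rewrite prednK.
  rewrite inv_sym; apply: ip_inv; lia.
Qed.

Lemma ip_d i j : 2 < k -> i.+2 <= j -> j < k -> (p (x i) < p (x j)) = (p (x 0) < p (x 2)).
Proof.
move=> hk.
have D0 : forall m, 2 <= m -> m < k -> (p (x 0) < p (x m)) = (p (x 0) < p (x 2)).
  elim=> [|m IH] // hj hjk.
  case: (eqVneq m.+1 2) => [-> //|hne].
  rewrite -IH; [|lia|lia].
  have n0m : x m != x 0 by apply: ip_neq; lia.
  have n0m1 : x m.+1 != x 0 by apply: ip_neq; lia.
  rewrite (p_flip n0m) (p_flip n0m1); congr (~~ _); symmetry.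
  apply: L_B.
  - apply: ip_inv; lia.
  - apply: ip_ninv'; lia.
  - apply: ip_ninv'; lia.
  - by rewrite eq_sym.
  - by rewrite eq_sym.
move: j; elim: i => [|i IH] j hij hjk; first exact: D0.
rewrite -(IH j); [|lia|lia].
symmetry; apply: L_B.
- apply: ip_inv; lia.
- apply: ip_ninv; lia.
- apply: ip_ninv; lia.
- apply: ip_neq; lia.
- apply: ip_neq; lia.
Qed.

Lemma ip_orient i : i.+1 < k -> e (x i) (x i.+1) = e (x 0) (x 1).
Proof.
elim: i => [//|i IH] h; rewrite -IH; last by lia.
symmetry; apply: L_orient.
- apply: ip_inv; lia.
- apply: ip_inv; lia.
- apply: ip_ninv; lia.
- apply: ip_neq; lia.
Qed.

Lemma ip_par i : i.+1 < k -> b1 (x i) (x i.+1) = b1 (x 0) (x 1) (+) odd i.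
Proof.
elim: i => [|i IH] h; first by rewrite addbF.
have := L_alt (v:=x i.+1) (a:=x i) (b:=x i.+2).
rewrite inv_sym ip_inv ?ip_inv ?ip_neq //; try lia.
move=> /(_ erefl erefl erefl); rewrite b1_sym IH /=; last by lia.
by case: (b1 (x 0) (x 1)); case: (odd i); case: (b1 (x i.+1) (x i.+2)).
Qed.

Lemma ip_interior w i : w \notin P -> 0 < i -> i.+1 < k -> ~~ inv (x i) w.
Proof.
move=> hw hi hik; apply/negP => h.
have nw : forall j, j < k -> x j != w.
  by move=> j hj; apply: contraNneq hw => <-; apply: mem_nth.
exfalso; apply: (L_deg (v:=x i) (a:=x i.-1) (b:=x i.+1) (c:=w)) => //.
- have -> : x i = x (i.-1).+1 by rewrite prednK.
  rewrite inv_sym; apply: ip_inv; lia.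
- apply: ip_inv; lia.
- apply: ip_neq; lia.
- apply: nw; lia.
- apply: nw; lia.
Qed.

End Path.

Lemma ip_rev P : ipath P -> ipath (rev P).
Proof.
case=> hu hP; split; first by rewrite rev_uniq.
move=> i j; rewrite size_rev => hi hj.
rewrite !nth_rev // hP; [|lia|lia].
have E1 : (size P - i.+1 == (size P - j.+1).+1) = (j == i.+1) by apply/eqP/eqP; lia.
have E2 : (size P - j.+1 == (size P - i.+1).+1) = (i == j.+1) by apply/eqP/eqP; lia.
by rewrite E1 E2 orbC.
Qed.

Lemma ip_rcons P w : ipath P -> w \notin P -> 0 < size P ->
  (forall i, i < size P -> inv (nth x0 P i) w = (i == (size P).-1)) ->
  ipath (rcons P w).
Proof.
case=> hu hP hw hk hi; split; first by rewrite rcons_uniq hw.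
move=> i j; rewrite size_rcons !ltnS !nth_rcons.
case: (ltngtP i (size P)) => // hi1 _; case: (ltngtP j (size P)) => // hj1 _.
- exact: hP.
- rewrite hi //; apply/eqP/idP; [move=> ->; apply/orP; right; apply/eqP; lia|].
  case/orP => /eqP; lia.
- rewrite inv_sym hi //; apply/eqP/idP; [move=> ->; apply/orP; left; apply/eqP; lia|].
  case/orP => /eqP; lia.
- by rewrite inv_irr; apply/esym/negP; case/orP => /eqP; lia.
Qed.

Definition ipathb (P : seq V) := uniq P && [forall i : 'I_(size P), [forall j : 'I_(size P),
  inv (nth x0 P i) (nth x0 P j) == ((nat_of_ord i == (nat_of_ord j).+1) || (nat_of_ord j == (nat_of_ord i).+1))]].

Lemma ipathP P : reflect (ipath P) (ipathb P).
Proof.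
apply: (iffP andP) => [[hu /forallP H]|[hu H]]; split => //.
- by move=> i j hi hj; move: (H (Ordinal hi)) => /forallP /(_ (Ordinal hj)) /eqP.
- apply/forallP => i; apply/forallP => j; apply/eqP; exact: H.
Qed.

Lemma ip_size P : ipath P -> size P <= #|V|.
Proof. by case=> /card_uniqP <- _; exact: max_card. Qed.

Lemma ex_max P0 : ipath P0 -> exists P,
  [/\ ipath P, size P0 <= size P & forall R, ipath R -> size R <= size P].
Proof.
move=> h0.
pose pr k := [exists t : k.-tuple V, ipathb t].
have exP : exists k, pr k.
  by exists (size P0); apply/existsP; exists (in_tuple P0); exact/ipathP.
have ubP : forall k, pr k -> k <= #|V|.
  by move=> k /existsP [t /ipathP ht]; rewrite -(size_tuple t); exact: ip_size.
case: (ex_maxnP exP ubP) => m /existsP [t /ipathP ht] hmax.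
exists t; split => //; rewrite size_tuple.
- apply: hmax; apply/existsP; exists (in_tuple P0); exact/ipathP.
- move=> R hR; apply: hmax; apply/existsP; exists (in_tuple R); exact/ipathP.
Qed.

Lemma ip_E2 P w : ipath P -> (forall R, ipath R -> size R <= size P) -> w \notin P ->
  1 < size P -> inv (nth x0 P (size P).-1) w -> inv (nth x0 P 0) w.
Proof.
move=> hP hmax hw hk hl; apply: contraT => h0.
have : ipath (rcons P w).
  apply: ip_rcons => //; first lia.
  move=> i hi; case: (eqVneq i (size P).-1) => [->//|hne].
  case: (posnP i) => [->|hi0]; first by apply/negbTE.
  apply/negbTE; apply: ip_interior => //; lia.
by move/hmax; rewrite size_rcons ltnn.
Qed.

Lemma ip_E3 P w : ipath P -> (forall R, ipath R -> size R <= size P) -> w \notin P ->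
  1 < size P -> inv (nth x0 P 0) w -> inv (nth x0 P (size P).-1) w.
Proof.
move=> hP hmax hw hk h0.
have := ip_E2 (P:=rev P) (w:=w) (ip_rev hP).
rewrite size_rev mem_rev !nth_rev ?size_rev; try lia.
rewrite subn1 prednK; last lia.
rewrite subnn; apply => //.
Qed.

Lemma L_hom (Q : seq V) : 1 < size Q ->
  (forall i, i.+1 < size Q -> inv (nth x0 Q i) (nth x0 Q i.+1)) ->
  (forall y w, y \in Q -> inv y w -> w \in Q) -> forall v, v \in Q.
Proof.
move=> hs hc hcl.
have hasinv : forall y, y \in Q -> exists w, inv y w.
  move=> y hy; set i := index y Q; have hi : i < size Q by rewrite index_mem.
  rewrite -(nth_index x0 hy) -/i.
  case: (ltnP i.+1 (size Q)) => h; first by exists (nth x0 Q i.+1); apply: hc.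
  exists (nth x0 Q i.-1); have hi0 : 0 < i by lia.
  have -> : nth x0 Q i = nth x0 Q (i.-1).+1 by rewrite prednK.
  rewrite inv_sym; apply: hc; lia.
pose X := [set v | v \in Q].
have hh : homogeneous e X.
  move=> w; rewrite inE => hw.
  have nwy : forall y, y \in Q -> w != y by move=> y hy; apply: contraNneq hw => ->.
  have nob : forall y, y \in Q -> ~~ b1 w y.
    move=> y hy; apply/negP => hb; rewrite b1_sym in hb.
    case: (hasinv y hy) => z hz.
    by move/negP: hw; apply; apply: (hcl y) => //; apply: L_b1inv hb hz.
  have ex : forall y, y \in Q -> e w y = (p w < p y).
    by move=> y hy; rewrite (e_b1 (nwy y hy)) (negbTE (nob y hy)); case: (_ < _).
  have side : forall i, i < size Q -> (p w < p (nth x0 Q i)) = (p w < p (nth x0 Q 0)).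
    elim=> [//|i IH] hi; rewrite -IH; last lia.
    have m1 : nth x0 Q i \in Q by apply: mem_nth; apply: ltnW.
    have m2 : nth x0 Q i.+1 \in Q by apply: mem_nth.
    have n1 := nwy _ m1; have n2 := nwy _ m2.
    rewrite -[LHS]negbK -[RHS]negbK -(p_flip n1) -(p_flip n2); congr (~~ _).
    symmetry; apply: L_B.
    - apply: hc; lia.
    - by apply/negP => /(hcl _ _ m1); apply/negP.
    - by apply/negP => /(hcl _ _ m2); apply/negP.
    - exact: n1.
    - exact: n2.
  case E: (p w < p (nth x0 Q 0)); [left|right] => y; rewrite inE => hy.
  - by rewrite ex // -(nth_index x0 hy) side ?index_mem // E.
  - rewrite e_asym; last by rewrite eq_sym; apply: nwy.
    by rewrite ex // -(nth_index x0 hy) side ?index_mem // E.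
case: (Hpr hh) => [/card_le1_eqP h|hT] v.
- exfalso.
  have m0 : nth x0 Q 0 \in X by rewrite inE; apply: mem_nth; apply: ltnW.
  have m1 : nth x0 Q 1 \in X by rewrite inE; apply: mem_nth.
  have h01 := h _ _ m0 m1.
  by move: (inv_neq (hc 0 hs)); rewrite h01 eqxx.
- have : v \in X by rewrite hT inE.
  by rewrite inE.
Qed.

Lemma card_le_seq (r : seq V) : (forall v, v \in r) -> #|V| <= size r.
Proof.
move=> h; apply: leq_trans (card_size r); apply: subset_leq_card.
by apply/subsetP => v _; apply: h.
Qed.

Lemma lineG (g : nat -> V) k : 2 < k ->
  (forall i j, i < k -> j < k -> g i = g j -> i = j) ->
  (forall v, exists2 i, i < k & g i = v) ->
  (forall i j, i.+2 <= j -> j < k -> e (g i) (g j)) ->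
  (forall i, i.+1 < k -> e (g i) (g i.+1) = e (g 0) (g 1)) ->
  iso_to_Pn e k.
Proof.
move=> hk ginj gsur gfar gcons.
have gne : forall i j, i < k -> j < k -> i != j -> g i != g j.
  by move=> i j hi hj; apply: contra => /eqP /(ginj i j hi hj) ->.
case Eg: (e (g 0) (g 1)).
- exfalso.
  pose X := [set v | v != g 0].
  have hX : homogeneous e X.
    move=> w; rewrite inE negbK => /eqP ->; left => y; rewrite inE.
    case: (gsur y) => i hi <- hne.
    have hi0 : i != 0 by apply: contraNneq hne => ->.
    case: (eqVneq i 1) => [->//|hi1]; apply: gfar => //; lia.
  case: (Hpr hX) => [/card_le1_eqP h|hT].
  + have m1 : g 1 \in X by rewrite inE eq_sym; apply: gne; lia.
    have m2 : g 2 \in X by rewrite inE eq_sym; apply: gne; lia.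
    have E := h _ _ m1 m2.
    have k1 : 1 < k by lia.
    by move: (gne 1 2 k1 hk isT); rewrite E eqxx.
  + have : g 0 \in X by rewrite hT inE.
    by rewrite inE eqxx.
- exists (fun i : 'I_k => g i); split.
  + apply: inj_card_bij.
    * move=> i j E; apply: val_inj; exact: ginj (ltn_ord i) (ltn_ord j) E.
    * rewrite card_ord; have := card_le_seq (r := [seq g i | i <- iota 0 k]).
      rewrite size_map size_iota; apply => v; case: (gsur v) => i hi <-.
      by apply: map_f; rewrite mem_iota.
  + move=> i j; rewrite /Pn_rel.
    have hi := ltn_ord i; have hj := ltn_ord j.
    move: (nat_of_ord i) (nat_of_ord j) hi hj => a b ha hb.
    case: (ltngtP a b) => hab.
    * case: (eqVneq b a.+1) => [->|hne].
      - rewrite gcons ?Eg; last lia.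
        by apply/esym/negP => /orP [h|/eqP h]; lia.
      - rewrite gfar; [|lia|done].
        by apply/esym/orP; left; lia.
    * rewrite e_asym; last by apply: gne; lia.
      case: (eqVneq a b.+1) => [->|hne].
      - by rewrite gcons ?Eg ?eqxx ?orbT //; lia.
      - rewrite gfar; [|lia|lia].
        by apply/esym/negP => /orP [h|/eqP h]; lia.
    * rewrite hab e_irr.
      by apply/esym/negP => /orP [h|/eqP h]; lia.
Qed.

Lemma P2 a b : a != b -> (forall v, v \in [:: a; b]) -> e b a -> iso_to_Pn e 2.
Proof.
move=> nab hc hba.
have hab : e a b = false by rewrite e_asym // hba.
exists (fun i : 'I_2 => nth a [:: a; b] i); split.
- apply: inj_card_bij; last by rewrite card_ord; exact: (card_le_seq hc).
  move=> i j /eqP; rewrite nth_uniq //=; first by move/eqP/val_inj.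
  by rewrite inE andbT.
- by move=> [[|[|i]] hi] [[|[|j]] hj] //=; rewrite /Pn_rel /= ?e_irr.
Qed.

Lemma P4base a b c d : uniq [:: a; b; c; d] -> (forall v, v \in [:: a; b; c; d]) ->
  e a b -> e b c -> e c d -> e d a -> e a c -> e d b -> iso_to_Pn e 4.
Proof.
move=> hu hc hab hbc hcd hda hac hdb.
have dd : forall u v, u \in [:: a; b; c; d] -> v \in [:: a; b; c; d] ->
  index u [:: a; b; c; d] != index v [:: a; b; c; d] -> u != v.
  by move=> u v _ _; apply: contra => /eqP ->.
have nab : a != b by apply: contraTneq hu => ->; rewrite /= !inE !eqxx.
have nac : a != c by apply: contraTneq hu => ->; rewrite /= !inE !eqxx ?orbT.
have nad : a != d by apply: contraTneq hu => ->; rewrite /= !inE !eqxx ?orbT.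
have nbc : b != c by apply: contraTneq hu => ->; rewrite /= !inE !eqxx ?orbT ?andbF.
have nbd : b != d by apply: contraTneq hu => ->; rewrite /= !inE !eqxx ?orbT ?andbF.
have ncd : c != d by apply: contraTneq hu => ->; rewrite /= !inE !eqxx ?orbT ?andbF.
have rev : forall u v, u != v -> e u v -> e v u = false.
  by move=> u v nuv huv; rewrite e_asym ?huv // eq_sym.
have hba := rev _ _ nab hab; have hcb := rev _ _ nbc hbc; have hdc := rev _ _ ncd hcd.
have nda : d != a by rewrite eq_sym.
have ndb : d != b by rewrite eq_sym.
have had := rev d a nda hda.
have hca := rev _ _ nac hac; have hbd := rev d b ndb hdb.
exists (fun i : 'I_4 => nth a [:: a; d; c; b] i); split.
- apply: inj_card_bij; last by rewrite card_ord; exact: (card_le_seq hc).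
  move=> i j /eqP; rewrite nth_uniq //=; first by move/eqP/val_inj.
  have nba : b != a by rewrite eq_sym.
  have nca : c != a by rewrite eq_sym.
  have ncb : c != b by rewrite eq_sym.
  have ndc : d != c by rewrite eq_sym.
  by rewrite /= !inE ?(negbTE nab) ?(negbTE nac) ?(negbTE nad) ?(negbTE nbc) ?(negbTE nbd) ?(negbTE ncd)
    ?(negbTE nba) ?(negbTE nca) ?(negbTE ncb) ?(negbTE nda) ?(negbTE ndb) ?(negbTE ndc).
- move=> [[|[|[|[|i]]]] hi] [[|[|[|[|j]]]] hj] //=; rewrite /Pn_rel /= ?e_irr //.
  all: by rewrite ?hab ?hbc ?hcd ?hda ?hac ?hdb ?hba ?hcb ?hdc ?had ?hca ?hbd.
Qed.

Lemma P4cyc a b c d : uniq [:: a; b; c; d] -> (forall v, v \in [:: a; b; c; d]) ->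
  e a b -> e b c -> e c d -> e d a -> iso_to_Pn e 4.
Proof.
move=> hu hc hab hbc hcd hda.
have hu1 : uniq [:: b; c; d; a] by have := hu; rewrite -(rot_uniq 1).
have hu2 : uniq [:: c; d; a; b] by have := hu; rewrite -(rot_uniq 2).
have hu3 : uniq [:: d; a; b; c] by have := hu; rewrite -(rot_uniq 3).
have hc1 : forall v, v \in [:: b; c; d; a] by move=> v; have := hc v; rewrite -(mem_rot 1).
have hc2 : forall v, v \in [:: c; d; a; b] by move=> v; have := hc v; rewrite -(mem_rot 2).
have hc3 : forall v, v \in [:: d; a; b; c] by move=> v; have := hc v; rewrite -(mem_rot 3).
have nac : a != c by apply: contraTneq hu => ->; rewrite /= !inE !eqxx ?orbT.
have nbd : b != d by apply: contraTneq hu => ->; rewrite /= !inE !eqxx ?orbT ?andbF.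
case Eac: (e a c); case Ebd: (e b d).
- exact: (P4base hu1 hc1 hbc hcd hda hab Ebd Eac).
- have hdb : e d b by rewrite e_asym ?Ebd // eq_sym.
  exact: (P4base hu hc hab hbc hcd hda Eac hdb).
- have hca : e c a by rewrite e_asym ?Eac // eq_sym.
  exact: (P4base hu2 hc2 hcd hda hab hbc hca Ebd).
- have hca : e c a by rewrite e_asym ?Eac // eq_sym.
  have hdb : e d b by rewrite e_asym ?Ebd // eq_sym.
  exact: (P4base hu3 hc3 hda hab hbc hcd hdb hca).
Qed.

Lemma P4cycg a b c d : uniq [:: a; b; c; d] -> (forall v, v \in [:: a; b; c; d]) ->
  e a b = e b c -> e b c = e c d -> e c d = e d a -> iso_to_Pn e 4.
Proof.
move=> hu hc h1 h2 h3.
have nab : a != b by apply: contraTneq hu => ->; rewrite /= !inE !eqxx.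
have nbc : b != c by apply: contraTneq hu => ->; rewrite /= !inE !eqxx ?orbT ?andbF.
have ncd : c != d by apply: contraTneq hu => ->; rewrite /= !inE !eqxx ?orbT ?andbF.
have nda : d != a by apply: contraTneq hu => ->; rewrite /= !inE !eqxx ?orbT.
case E: (e a b).
- have hbc : e b c by rewrite -h1.
  have hcd : e c d by rewrite -h2.
  have hda : e d a by rewrite -h3.
  exact: (P4cyc hu hc E hbc hcd hda).
- have ndc : d != c by rewrite eq_sym.
  have ncb : c != b by rewrite eq_sym.
  have nad : a != d by rewrite eq_sym.
  apply: (P4cyc (a:=a) (b:=d) (c:=c) (d:=b)).
  + by have := hu; rewrite -(rot_uniq 1) -rev_uniq.
  + by move=> v; have := hc v; rewrite -(mem_rot 1) -mem_rev.
  + by rewrite (e_asym nad) -h3 -h2 -h1 E.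
  + by rewrite (e_asym ndc) -h2 -h1 E.
  + by rewrite (e_asym ncb) -h1 E.
  + by rewrite e_asym ?E // eq_sym.
Qed.

Lemma s_eq : (forall u v, ~~ inv u v) -> s1 = s2.
Proof.
move=> h; apply: (@irr_sorted_eq _ (fun u v => p u < p v)).
- by move=> y u v /= h1 h2; apply: ltn_trans h1 h2.
- by move=> u /=; rewrite ltnn.
- move: (proj1 VO1) => u1.
  by apply/(sortedP x0) => i hi /=; rewrite /p !index_uniq //; apply: ltnW.
- move: (proj1 VO2) => u2.
  by apply/(sortedP x0) => i hi /=; rewrite (ninv_eq (h _ _)) /q !index_uniq //; apply: ltnW.
- by move=> v; rewrite (proj2 VO1) (proj2 VO2).
Qed.

Lemma size3 (Q : seq V) : size Q = 3 -> Q = [:: nth x0 Q 0; nth x0 Q 1; nth x0 Q 2].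
Proof. by case: Q => [|u1 [|u2 [|u3 [|]]]]. Qed.
Lemma size2 (Q : seq V) : size Q = 2 -> Q = [:: nth x0 Q 0; nth x0 Q 1].
Proof. by case: Q => [|u1 [|u2 [|]]]. Qed.

Lemma main : s1 != s2 -> exists n, iso_to_Pn e n.
Proof.
move=> hne.
have [a [b hab]] : exists a b, inv a b.
  case: (boolP [exists a, exists b, inv a b]) => [/existsP [a /existsP [b h]]|/existsPn h].
  - by exists a, b.
  - have E : s1 = s2.
      by apply: s_eq => u v; move/existsPn: (h u) => /(_ v).
    by rewrite E eqxx in hne.
have ip0 : ipath [:: a; b].
  split; first by rewrite /= inE andbT (inv_neq hab).
  move=> [|[|i]] [|[|j]] //= hi hj; rewrite ?inv_irr ?hab //; by rewrite inv_sym.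
case: (ex_max ip0) => P [hP hsz hmax]; rewrite /= in hsz.
have [m hm] : exists m, size P = m.+2 by exists (size P).-2; lia.
have xneq : forall i j, i < m.+2 -> j < m.+2 -> i != j -> nth x0 P i != nth x0 P j.
  by move=> i j hi hj; apply: ip_neq; rewrite ?hm.
have xinv : forall i, i < m.+1 -> inv (nth x0 P i) (nth x0 P i.+1).
  by move=> i hi; apply: ip_inv; rewrite ?hm.
have xnP : forall w i, w \notin P -> i < m.+2 -> nth x0 P i != w.
  by move=> w i hw hi; apply: contraNneq hw => <-; apply: mem_nth; rewrite hm.
case: (boolP [exists y, [&& y \notin P, inv (nth x0 P 0) y & inv (nth x0 P (size P).-1) y]]).
-
  case/existsP => y /and3P [hyP hy0 hyl]; rewrite hm /= in hyl.
  have cover : forall v, v \in y :: P.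
    apply: L_hom.
    + by rewrite /= hm.
    + move=> [|i] /= hi; first by rewrite inv_sym.
      by apply: xinv; rewrite hm in hi; lia.
    + move=> u w; rewrite inE => hu huw; apply: contraT; rewrite inE negb_or => /andP [hwy hwP].
      case/orP: hu => [/eqP hu|hu].
      * subst u; exfalso; apply: (L_deg (v:=y) (a:=nth x0 P 0) (b:=nth x0 P m.+1) (c:=w)).
        -- by rewrite inv_sym.
        -- by rewrite inv_sym.
        -- done.
        -- by apply: xneq.
        -- by apply: xnP.
        -- by apply: xnP.
      * have hi : index u P < m.+2 by rewrite -hm index_mem.
        move: huw; rewrite -(nth_index x0 hu); set i := index u P => huw.
        case: (posnP i) => [hi0|hi0].
        -- rewrite hi0 in huw.
           exfalso; apply: (L_deg (v:=nth x0 P 0) (a:=nth x0 P 1) (b:=y) (c:=w)) => //.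
           ++ exact: xinv.
           ++ by apply: xnP.
           ++ by apply: xnP.
           ++ by rewrite eq_sym.
        case: (ltnP i.+1 m.+2) => hi1.
        -- have hik : i.+1 < size P by rewrite hm.
           by have := ip_interior hP hwP hi0 hik; rewrite huw.
        -- have hi2 : i = m.+1 by lia.
           rewrite hi2 in huw.
           exfalso; apply: (L_deg (v:=nth x0 P m.+1) (a:=nth x0 P m) (b:=y) (c:=w)) => //.
           ++ by rewrite inv_sym; apply: xinv.
           ++ by apply: xnP.
           ++ by apply: xnP.
           ++ by rewrite eq_sym.
  have l1 : 1 < m.+2 by [].
  have l0 : 0 < m.+1 by [].
  have lm : m < m.+2 by lia.
  have lm1 : m.+1 < m.+2 by [].
  have flip : forall u v : V, u != v -> v != u by move=> u v; rewrite eq_sym.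
  have isym : forall u v, inv u v -> inv v u by move=> u v; rewrite inv_sym.
  have hodd : odd m.
    have P1 := L_alt hy0 (xinv 0 l0) (flip _ _ (xnP y 1 hyP l1)).
    have P2 := L_alt hyl (isym _ _ (xinv m (ltnSn m))) (flip _ _ (xnP y m hyP lm)).
    have P3 := L_alt (v:=y) (isym _ _ hy0) (isym _ _ hyl) (xneq 0 m.+1 isT lm1 isT).
    have par := ip_par hP (i:=m).
    rewrite hm in par; have {}par := par (ltnSn _).
    rewrite (b1_sym y) (b1_sym y) (b1_sym (nth x0 P m.+1) (nth x0 P m)) in P2 P3.
    move: P1 P2 P3 par.
    case: (odd m) => //; case: (b1 (nth x0 P 0) y); case: (b1 (nth x0 P 0) (nth x0 P 1));
      case: (b1 (nth x0 P m.+1) y); by case: (b1 (nth x0 P m) (nth x0 P m.+1)).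
  have hm1 : forall t, odd t -> t < 2 -> t = 1 by case=> [|[|t]].
  case: (ltnP m 2) => hm2.
  - have m1 := hm1 m hodd hm2; subst m.
    have EP := size3 hm.
    have hu : uniq (y :: P) by rewrite /= hyP (proj1 hP).
    rewrite EP in hu cover.
    exists 4; apply: (P4cycg hu cover).
    + apply: L_orient.
      * by rewrite inv_sym.
      * exact: xinv.
      * by rewrite inv_sym; apply: ip_interior; rewrite ?hm.
      * by rewrite eq_sym; apply: xnP.
    + by rewrite (ip_orient hP (i:=1)) // hm.
    + apply: L_orient.
      * exact: xinv.
      * exact: hyl.
      * by apply: ip_interior; rewrite ?hm.
      * by apply: xnP.
  - exfalso.
    have hm3 : 3 <= m by move: hodd hm2; case: (m) => [|[|[|t]]].
    have n2y : nth x0 P 2 != y by apply: xnP => //; lia.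
    have n20 : nth x0 P 2 != nth x0 P 0 by apply: xneq => //; lia.
    have n2l : nth x0 P 2 != nth x0 P m.+1 by apply: xneq => //; lia.
    have ny2 : ~~ inv y (nth x0 P 2).
      by rewrite inv_sym; apply: ip_interior; rewrite ?hm //; lia.
    have sz0 : 0 < size P by rewrite hm.
    have sz2 : 2 < size P by rewrite hm; lia.
    have sl : m.+1 < size P by rewrite hm.
    have l13 : 1 < 2 by [].
    have l3m : 3 < m.+1 by lia.
    have l4m : 4 <= m.+1 by lia.
    have A := L_B (isym _ _ hy0) ny2 (ip_ninv hP sz0 sz2 l13) n2y n20.
    have B := L_B hyl (ip_ninv' hP sz2 sl l3m) ny2 n2l n2y.
    have D := ip_d hP sz2 l4m sl.
    have F := p_flip n2l.
    move: A B D F.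
    case: (p y < p (nth x0 P 2)); case: (p (nth x0 P 0) < p (nth x0 P 2));
      case: (p (nth x0 P m.+1) < p (nth x0 P 2)); by case: (p (nth x0 P 2) < p (nth x0 P m.+1)).
- move/existsPn => hno.
  have hk : 1 < size P by rewrite hm.
  have closed : forall u w, u \in P -> inv u w -> w \in P.
    move=> u w hu huw; apply: contraT => hwP.
    have hi : index u P < m.+2 by rewrite -hm index_mem.
    move: huw; rewrite -(nth_index x0 hu); set i := index u P => huw.
    case: (posnP i) => [hi0|hi0].
    + rewrite hi0 in huw.
      by move: (hno w); rewrite hwP huw (ip_E3 hP hmax hwP hk huw).
    case: (ltnP i.+1 m.+2) => hi1.
    + have hik : i.+1 < size P by rewrite hm.
      by have := ip_interior hP hwP hi0 hik; rewrite huw.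
    + have hi2 : i = m.+1 by lia.
      have hl : inv (nth x0 P (size P).-1) w by rewrite hm -hi2.
      by move: (hno w); rewrite hwP hl (ip_E2 hP hmax hwP hk hl).
  have cover : forall v, v \in P.
    apply: L_hom => //.
    by move=> i hi; apply: ip_inv.
  case: (posnP m) => [m0|mpos].
  + subst m; have EP := size2 hm; rewrite EP in cover.
    have n01 : nth x0 P 0 != nth x0 P 1 by apply: xneq.
    exists 2; case E: (e (nth x0 P 1) (nth x0 P 0)).
    * exact: (P2 n01 cover E).
    * apply: (P2 (a:=nth x0 P 1) (b:=nth x0 P 0)).
      -- by rewrite eq_sym.
      -- by move=> v; have := cover v; rewrite !inE orbC.
      -- by rewrite e_asym ?E // eq_sym.
  + have far : forall i j, i.+2 <= j -> j < m.+2 ->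
        e (nth x0 P i) (nth x0 P j) = (p (nth x0 P 0) < p (nth x0 P 2)).
      move=> i j hij hj.
      have nij : nth x0 P i != nth x0 P j by apply: xneq => //; lia.
      have nb : ~~ b1 (nth x0 P i) (nth x0 P j).
        apply/negP => hb.
        have [z hz] := ip_has hP (i:=i) hk (ltac:(rewrite hm; lia)).
        have := L_b1inv hb hz.
        have hi' : i < size P by rewrite hm; lia.
        have hj' : j < size P by rewrite hm; lia.
        have hij' : i.+1 < j by lia.
        by rewrite (negbTE (ip_ninv hP hi' hj' hij')).
      have hk2 : 2 < size P by rewrite hm; lia.
      have hj' : j < size P by rewrite hm; lia.
      rewrite (e_b1 nij) (negbTE nb) (ip_d hP hk2 hij hj').
      by case: (_ < _).
    exists m.+2.
    case c: (p (nth x0 P 0) < p (nth x0 P 2)).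
    * apply: (lineG (g := fun i => nth x0 P i)).
      -- lia.
      -- move=> i j hi hj E; case: (eqVneq i j) => // hij.
         by move: (xneq i j hi hj hij); rewrite E eqxx.
      -- move=> v; exists (index v P); first by rewrite -hm index_mem.
         by rewrite nth_index.
      -- by move=> i j hij hj; rewrite far.
      -- move=> i hi /=; have hi' : i.+1 < size P by rewrite hm.
         exact: (ip_orient hP hi').
    * have cons' : forall i, i < m.+1 ->
          e (nth x0 P (m.+1 - i)) (nth x0 P (m.+1 - i.+1)) = ~~ e (nth x0 P 0) (nth x0 P 1).
        move=> i hi.
        have -> : m.+1 - i = (m - i).+1 by lia.
        have -> : m.+1 - i.+1 = m - i by lia.
        rewrite e_asym; last by apply: xneq => //; lia.
        by rewrite ip_orient // hm; lia.
      apply: (lineG (g := fun i => nth x0 P (m.+1 - i))).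
      -- lia.
      -- move=> i j hi hj E; case: (eqVneq i j) => // hij.
         have hij' : m.+1 - i != m.+1 - j by apply/eqP; lia.
         have hi' : m.+1 - i < m.+2 by lia.
         have hj' : m.+1 - j < m.+2 by lia.
         by move: (xneq _ _ hi' hj' hij'); rewrite E eqxx.
      -- move=> v; exists (m.+1 - index v P).
         ++ lia.
         ++ have hv : index v P < m.+2 by rewrite -hm index_mem.
            by rewrite subKn ?nth_index //; lia.
      -- move=> i j hij hj /=.
         rewrite e_asym; last by apply: xneq => //; lia.
         by rewrite far ?c //; lia.
      -- move=> i hi /=; rewrite cons'; last lia.
         by rewrite -(cons' 0).
Qed.
End S.

Theorem corollary5p5 (V : finType) (e : rel V) :
  tournament e -> prime_tournament e ->
  (forall n : nat, ~ iso_to_Pn e n) ->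
  forall s1 s2 : seq V, matching_ordering e s1 -> matching_ordering e s2 -> s1 = s2.
Proof.
move=> Ht Hpr Hnot s1 s2 M1 M2.
case: (eqVneq s1 s2) => // hne; exfalso.
case/card_gt0P: (proj1 Ht) => x0 _.
have [n hn] := main x0 Ht Hpr M1 M2 hne.
exact: (Hnot n hn).
Qed.
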